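(* Let $A\in\mathbb{R}^{n\times n}$ be symmetric with orthonormal eigenbasis $\vec{q}_1,\dots,\vec{q}_n$, $A\vec{q}_i=\lambda_i\vec{q}_i$, let $s$ be the number of distinct eigenvalues of $A$, and let $\vec{x}_0\in\mathbb{R}^n$ satisfy $\vec{q}_i^\top\vec{x}_0\neq 0$ for all $i$. Let $\vec{x}_{t+1}=A\vec{x}_t$, $X_k=[\vec{x}_0\ \cdots\ \vec{x}_k]$, $Y_k=[\vec{x}_1\ \cdots\ \vec{x}_{k+1}]$ and $\hat{A}_k=Y_kX_k^{\dagger}$. Assume $A$ has at least one eigenvalue of algebraic multiplicity greater than one, and let $\lambda^*=\max_{i:\,m(\lambda_i)>1}|\lambda_i|$. If $k\ge s$, then $\|A-\hat{A}_k\|_2=\lambda^*$.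
   Context: $m(\lambda)$ denotes the algebraic multiplicity of the eigenvalue $\lambda$; $M^{\dagger}$ is the Moore–Penrose pseudo-inverse; $\|\cdot\|_2$ is the spectral norm. *)

(* Defs.v *)
From HB Require Import structures.
From mathcomp Require Import all_boot all_order all_algebra.
From mathcomp Require Import boolp classical_sets reals.
Set Implicit Arguments. Unset Strict Implicit. Unset Printing Implicit Defensive.
Import Order.TTheory GRing.Theory Num.Theory.
Local Open Scope ring_scope.
Local Open Scope classical_set_scope.

Definition is_MP_inverse (R : realType) (m p : nat)
  (M : 'M[R]_(m, p)) (P : 'M[R]_(p, m)) : Prop :=
  [/\ M *m P *m M = M, P *m M *m P = P,
      (M *m P)^T = M *m P & (P *m M)^T = P *m M].

(* Moore-Penrose pseudo-inverse M^dagger (chosen; it exists and is unique). *)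
Definition pinvMP (R : realType) (m p : nat) (M : 'M[R]_(m, p)) : 'M[R]_(p, m) :=
  xget 0 [set P | is_MP_inverse M P].

Definition norm2 (R : realType) (n : nat) (v : 'cV[R]_n) : R :=
  Num.sqrt (\sum_(i < n) v i 0 ^+ 2).

Definition spec_norm (R : realType) (m p : nat) (M : 'M[R]_(m, p)) : R :=
  sup [set r : R | exists v : 'cV[R]_p, norm2 v = 1 /\ r = norm2 (M *m v)].

Definition iter_x (R : realType) (n : nat) (A : 'M[R]_n) (x0 : 'cV[R]_n) (t : nat)
  : 'cV[R]_n := A ^+ t *m x0.

Definition Xmat (R : realType) (n : nat) (A : 'M[R]_n) (x0 : 'cV[R]_n) (k : nat)
  : 'M[R]_(n, k.+1) := \matrix_(i, j) iter_x A x0 j i 0.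
Definition Ymat (R : realType) (n : nat) (A : 'M[R]_n) (x0 : 'cV[R]_n) (k : nat)
  : 'M[R]_(n, k.+1) := \matrix_(i, j) iter_x A x0 j.+1 i 0.

Definition alg_mult (R : realType) (n : nat) (A : 'M[R]_n) (l : R) : nat :=
  mup l (char_poly A).

(* Main.v *)
From HB Require Import structures.
From mathcomp Require Import all_boot all_order all_algebra.
From mathcomp Require Import boolp classical_sets reals.
From mathcomp Require Import ring lra.
Require Import Defs.
Import Order.TTheory GRing.Theory Num.Theory.
Set Implicit Arguments. Unset Strict Implicit. Unset Printing Implicit Defensive.
Local Open Scope ring_scope.

Section MP.
Variable R : realType.

Lemma rv_self_eq0 p (u : 'rV[R]_p) : u *m u^T = 0 -> u = 0.
Proof.
move=> /matrixP /(_ 0 0); rewrite !mxE => H.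
have H2 : \sum_j u 0 j ^+ 2 = 0.
  rewrite -[RHS]H; apply: eq_bigr => j _; by rewrite ?mxE expr2.
apply/rowP => j; rewrite mxE.
have := psumr_eq0P (P := xpredT) (fun i _ => sqr_ge0 (u 0 i)) H2 (i := j) isT.
by move/eqP; rewrite sqrf_eq0 => /eqP.
Qed.

Lemma gram_unit r p (G : 'M[R]_(r, p)) : row_free G -> G *m G^T \in unitmx.
Proof.
move=> fG; rewrite -row_free_unit -kermx_eq0; apply/eqP/row_matrixP => i.
rewrite row0; set u := row i (kermx (G *m G^T)).
have hu : u *m (G *m G^T) = 0 by rewrite /u -row_mul mulmx_ker row0.
have : (u *m G) *m (u *m G)^T = 0.
  by rewrite trmx_mul mulmxA -(mulmxA u) hu mul0mx.
move/rv_self_eq0 => uG0.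
by apply: (row_free_inj fG); rewrite uG0 mul0mx.
Qed.

Lemma MP_factor m r p (F : 'M[R]_(m, r)) (G : 'M[R]_(r, p)) :
  row_free G -> row_free F^T ->
  is_MP_inverse (F *m G)
    (G^T *m invmx (G *m G^T) *m invmx (F^T *m F) *m F^T).
Proof.
move=> fG fF.
have uG := gram_unit fG; have uF := gram_unit fF.
rewrite trmxK in uF.
set IG := invmx (G *m G^T); set IF := invmx (F^T *m F).
have sG : IG^T = IG by rewrite /IG trmx_inv trmx_mul trmxK.
have sF : IF^T = IF by rewrite /IF trmx_inv trmx_mul trmxK.
have e1 : F *m G *m (G^T *m IG *m IF *m F^T) = F *m IF *m F^T.
  by rewrite !mulmxA -(mulmxA F G) -(mulmxA F) mulmxV // mulmx1.
have e2 : (G^T *m IG *m IF *m F^T) *m (F *m G) = G^T *m IG *m G.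
  rewrite !mulmxA -(mulmxA (G^T *m IG *m IF) F^T F).
  by rewrite -(mulmxA (G^T *m IG) IF) mulVmx // mulmx1.
split.
- by rewrite e1 !mulmxA -(mulmxA (F *m IF) F^T F) -(mulmxA F IF) mulVmx // mulmx1.

- rewrite e2 !mulmxA -(mulmxA (G^T *m IG) G G^T).
  by rewrite -(mulmxA (G^T *m IG) (G *m G^T) IG) mulmxV // mulmx1.
- by rewrite e1 !trmx_mul trmxK sF !mulmxA.
- by rewrite e2 !trmx_mul trmxK sG !mulmxA.
Qed.

Lemma MP_exists m p (M : 'M[R]_(m, p)) : exists P, is_MP_inverse M P.
Proof.
have fF : row_free (col_base M)^T by rewrite /row_free mxrank_tr; exact: col_base_full.
have := MP_factor (row_base_free M) fF; rewrite mulmx_base => H.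
by eexists; exact: H.
Qed.

Lemma pinvMP_spec m p (M : 'M[R]_(m, p)) : is_MP_inverse M (pinvMP M).
Proof.
rewrite /pinvMP; have [P hP] := MP_exists M.
exact: (@xgetPex _ 0 [set P | is_MP_inverse M P] (ex_intro _ P hP)).
Qed.
End MP.

Lemma core_zero (R : realType) n (lam c z : 'I_n -> R) (k : nat) :
  (size (undup [seq lam i | i <- enum 'I_n]) <= k)%N ->
  (forall t : 'I_k.+1, \sum_i c i * lam i ^+ t * z i = 0) ->
  forall i, (forall j, j != i -> lam j != lam i) -> c i * z i = 0.
Proof.
move=> hs ht i hu.
set r := [seq mu <- undup [seq lam j | j <- enum 'I_n] | mu != lam i].
set p := \prod_(mu <- r) ('X - mu%:P).
have sp : (size p <= k.+1)%N.
  rewrite /p size_prod_XsubC ltnS (leq_trans _ hs) //.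
  by rewrite /r size_filter count_size.
have H0 : \sum_j c j * z j * p.[lam j] = 0.
  transitivity (\sum_j \sum_(t < k.+1) p`_t * (c j * lam j ^+ t * z j)).
    apply: eq_bigr => j _; rewrite (horner_coef_wide _ sp) mulr_sumr.
    by apply: eq_bigr => t _; ring.
  rewrite exchange_big /= big1 // => t _.
  by rewrite -mulr_sumr ht mulr0.
rewrite (bigD1 i) //= big1 ?addr0 in H0; last first.
  move=> j hj; apply/eqP; rewrite mulf_eq0; apply/orP; right.
  apply/eqP/rootP; rewrite root_prod_XsubC /r mem_filter hu //=.
  by rewrite mem_undup; apply/mapP; exists j; rewrite ?mem_enum.
move/eqP: H0; rewrite mulf_eq0 => /orP[/eqP //| hr].
have : root p (lam i) := hr.
by rewrite /p root_prod_XsubC /r mem_filter eqxx.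
Qed.

Section Norm.
Variable R : realType.

Definition sq m (u : 'cV[R]_m) := \sum_i u i 0 ^+ 2.

Lemma sqE m (u : 'cV[R]_m) : sq u = (u^T *m u) 0 0.
Proof. rewrite /sq mxE; apply: eq_bigr => i _; by rewrite mxE expr2. Qed.

Lemma sq_ge0 m (u : 'cV[R]_m) : 0 <= sq u.
Proof. by apply: sumr_ge0 => i _; exact: sqr_ge0. Qed.

Lemma norm2E m (u : 'cV[R]_m) : norm2 u = Num.sqrt (sq u).
Proof. by []. Qed.

Lemma sqZ m a (u : 'cV[R]_m) : sq (a *: u) = a ^+ 2 * sq u.
Proof.
rewrite /sq mulr_sumr; apply: eq_bigr => i _; by rewrite mxE exprMn.
Qed.

Lemma norm2Z m a (u : 'cV[R]_m) : norm2 (a *: u) = `|a| * norm2 u.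
Proof. by rewrite !norm2E sqZ sqrtrM ?sqr_ge0 // sqrtr_sqr. Qed.

Lemma sq_orth m (Q : 'M[R]_m) (z : 'cV[R]_m) : Q^T *m Q = 1%:M -> sq (Q *m z) = sq z.
Proof.
by move=> hQ; rewrite !sqE trmx_mul mulmxA -(mulmxA z^T) hQ mulmx1.
Qed.

Lemma norm2_eq1 m (u : 'cV[R]_m) : norm2 u = 1 -> sq u = 1.
Proof.
by move=> h; rewrite -[sq u]sqr_sqrtr ?sq_ge0 // -norm2E h expr1n.
Qed.

Lemma two_sum n (i0 j : 'I_n) (f : 'I_n -> R) : j != i0 ->
  (forall l, l != i0 -> l != j -> f l = 0) -> \sum_l f l = f i0 + f j.
Proof.
move=> hj hf; rewrite (bigD1 i0) //= (bigD1 j) //= big1 ?addr0 //.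
by move=> l /andP[h1 h2]; apply: hf.
Qed.

Lemma bigmax_attained (I : finType) (P : pred I) (F : I -> R) :
  (exists i, P i) -> (forall i, 0 <= F i) ->
  exists2 i, P i & \big[Num.max/0]_(i | P i) F i = F i.
Proof.
move=> [i Pi] F0.
have : (\big[Num.max/0]_(i | P i) F i = 0) \/
       (exists2 i, P i & \big[Num.max/0]_(i | P i) F i = F i).
  elim/big_ind: _ => //; [by left| |by move=> l Pl; right; exists l].
  move=> x y hx hy; have [_|_] := leP x y; [case: hy => [->|[l Pl ->]]|
    case: hx => [->|[l Pl ->]]]; by [left|right; exists l].
case=> // h0; exists i => //; apply/le_anti.
by rewrite le_bigmax_cond // andbT h0 F0.
Qed.

End Norm.

Section Spec.
Variables (R : realType) (n : nat) (A Q : 'M[R]_n) (lam : 'I_n -> R).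
Hypothesis hA : A^T = A.
Hypothesis hQ : Q^T *m Q = 1%:M.
Hypothesis hE : forall i : 'I_n, A *m col i Q = lam i *: col i Q.

Let D := diag_mx (\row_i lam i).

Lemma hQ' : Q *m Q^T = 1%:M.
Proof. exact: mulmx1C hQ. Qed.

Lemma AQ : A *m Q = Q *m D.
Proof.
apply/matrixP => i j; rewrite mul_mx_diag !mxE.
have := congr1 (fun M : 'cV_n => M i 0) (hE j); rewrite !mxE mulrC => <-.
by apply: eq_bigr => l _; rewrite !mxE.
Qed.

Lemma AQD : A = Q *m D *m Q^T.
Proof. by rewrite -AQ -mulmxA hQ' mulmx1. Qed.

Lemma char_polyA : char_poly A = \prod_(i < n) ('X - (lam i)%:P).
Proof.
have -> : char_poly A = char_poly D.
  rewrite /char_poly /char_poly_mx.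
  set Qp := map_mx (@polyC R) Q.
  have QQ : Qp *m Qp^T = 1%:M by rewrite /Qp map_trmx -map_mxM hQ' map_mx1.
  have -> : 'X%:M - map_mx (@polyC R) A
          = Qp *m ('X%:M - map_mx (@polyC R) D) *m Qp^T.
    rewrite mulmxBr mulmxBl mul_mx_scalar -scalemxAl QQ scalemx1.
    by rewrite AQD /Qp !map_mxM map_trmx.
  by rewrite !det_mulmx mulrAC -det_mulmx QQ det1 mul1r.
rewrite char_poly_trig ?diag_mx_is_trig //.
by apply: eq_bigr => i _; rewrite !mxE eqxx /= mulr1n.
Qed.

Lemma alg_multE i :
  alg_mult A (lam i) = (\sum_(j | lam j == lam i) 1)%N.
Proof.
rewrite /alg_mult char_polyA.
have -> : \prod_(j < n) ('X - (lam j)%:P)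
   = \prod_(x <- map lam (index_enum 'I_n)) ('X - x%:P) by rewrite big_map.
rewrite mu_prod_XsubC count_map sum1_count.
by apply: eq_count => j /=; rewrite eq_sym.
Qed.


Lemma mult_gt1 i :
  (1 < alg_mult A (lam i))%N <-> exists j, j != i /\ lam j = lam i.
Proof.
rewrite alg_multE sum1_card (cardD1x (A := fun j => lam j == lam i) (j := i)) //.
rewrite add1n ltnS; split.
  by move/card_gt0P => [j]; rewrite inE => /andP[/eqP hj hji]; exists j.
move=> [j [hji hj]]; apply/card_gt0P; exists j.
by rewrite inE hj eqxx hji.
Qed.

Lemma powAQ t : A ^+ t *m Q = Q *m diag_mx (\row_i lam i ^+ t).
Proof.
elim: t => [|t IH].
  rewrite expr0 mul1mx; apply/matrixP => i j.
  by rewrite mul_mx_diag !mxE expr0 mulr1.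
rewrite exprS -mulmxE -mulmxA IH mulmxA AQ -mulmxA mulmx_diag.
by congr (_ *m diag_mx _); apply/rowP => j; rewrite !mxE exprS.
Qed.

Lemma trpowA t : (A ^+ t)^T = A ^+ t.
Proof.
elim: t => [|t IH]; first by rewrite expr0 trmx1.
by rewrite exprS -mulmxE trmx_mul IH hA mulmxE -exprSr exprS.
Qed.

Variables (x0 : 'cV[R]_n) (k : nat).
Let c i := ((col i Q)^T *m x0) 0 0.

Lemma cE : (Q^T *m x0) = \col_i c i.
Proof.
apply/colP => i; rewrite /c !mxE; apply: eq_bigr => l _; by rewrite !mxE.
Qed.

Lemma XQz (z : 'cV[R]_n) (t : 'I_k.+1) :
  ((Xmat A x0 k)^T *m (Q *m z)) t 0 = \sum_i c i * lam i ^+ t * z i 0.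
Proof.
have -> : ((Xmat A x0 k)^T *m (Q *m z)) t 0
        = (x0^T *m (A ^+ t *m Q) *m z) 0 0.
  rewrite -!mulmxA (mulmxA x0^T) -trpowA -trmx_mul.
  rewrite !mxE; apply: eq_bigr => l _; by rewrite !mxE.
rewrite powAQ !mulmxA -[x0^T *m Q]trmxK trmx_mul trmxK cE mul_mx_diag.
rewrite !mxE; apply: eq_bigr => i _; by rewrite !mxE.
Qed.

Hypothesis hc : forall i, c i != 0.
Hypothesis hk : (size (undup [seq lam i | i <- enum 'I_n]) <= k)%N.
Let X := Xmat A x0 k.
Let L := \big[Num.max/0]_(i : 'I_n | (1 < alg_mult A (lam i))%N) `|lam i|.

Lemma YAX : Ymat A x0 k = A *m X.
Proof.
apply/matrixP => i j; rewrite /X /Ymat /Xmat [LHS]mxE [RHS]mxE.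
have -> : iter_x A x0 j.+1 = A *m iter_x A x0 j.
  by rewrite /iter_x exprS -mulmxE mulmxA.
rewrite mxE; by apply: eq_bigr => l _; rewrite !mxE.
Qed.

Lemma Xperp_zero (z : 'cV[R]_n) : X^T *m (Q *m z) = 0 ->
  forall i, ~~ (1 < alg_mult A (lam i))%N -> z i 0 = 0.
Proof.
move=> h0 i hi.
have hu : forall j, j != i -> lam j != lam i.
  move=> j hji; apply/eqP => hj; move/negP: hi; apply; apply/mult_gt1.
  by exists j.
have := core_zero (c := c) (z := fun i => z i 0) hk _ hu.
move=> /(_ _)/eqP; rewrite mulf_eq0 (negbTE (hc i)) /= => /(_ _)/eqP; apply.
move=> t; rewrite -XQz h0 mxE //.
Qed.

Lemma upper (P : 'M_(k.+1, n)) : is_MP_inverse X P ->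
  forall v, norm2 v = 1 -> norm2 ((A - Ymat A x0 k *m P) *m v) <= L.
Proof.
move=> [h1 h2 h3 h4] v hv.
set Pi := X *m P.
set w := v - Pi *m v.
have eM : (A - Ymat A x0 k *m P) *m v = A *m w.
  by rewrite YAX /w mulmxBl mulmxBr !mulmxA.
have hXt : X^T *m Pi = X^T by rewrite /Pi -h3 -trmx_mul h1.
have hXw : X^T *m w = 0 by rewrite /w mulmxBr mulmxA hXt subrr.
have hPP : Pi *m Pi = Pi by rewrite /Pi mulmxA h1.
have hPT : Pi^T = Pi by exact: h3.
have sqw : sq w <= sq v.
  have -> : sq w = sq v - sq (Pi *m v).
    rewrite !sqE /w [(v - _)^T]linearB /= [(Pi *m v)^T]trmx_mul hPT !mulmxBl !mulmxBr !mulmxA.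
    have e : v^T *m X *m P *m X = v^T *m X by rewrite -!mulmxA (mulmxA X P X) h1.
    by rewrite e subrr subr0 !mxE.
  by rewrite lerBlDr lerDl sq_ge0.
have sv := norm2_eq1 hv.
set z := Q^T *m w.
have hw : w = Q *m z by rewrite /z mulmxA hQ' mul1mx.
clearbody z.
have hz : X^T *m (Q *m z) = 0 by rewrite -hw hXw.
have z0 := Xperp_zero hz.
have L0 : 0 <= L.
  by rewrite /L; elim/big_ind: _ => // x y hx hy; rewrite le_max hx.
rewrite eM hw mulmxA AQ -mulmxA norm2E sq_orth ?hQ // -[X in _ <= X](ger0_norm L0) -sqrtr_sqr.
rewrite ler_wsqrtr //.
apply: (@le_trans _ _ (L ^+ 2 * sq z)).
  rewrite /sq mulr_sumr; apply: ler_sum => i _.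
  rewrite mul_diag_mx !mxE.
  case: (boolP (1 < alg_mult A (lam i))%N) => hi; last first.
    by rewrite z0 // !mulr0 expr0n /= mulr0.
  have hl : `|lam i| <= L by rewrite /L; exact: (le_bigmax_cond 0 (fun i => `|lam i|) hi).
  have hl2 : lam i ^+ 2 <= L ^+ 2.
    by rewrite -(real_normK (num_real (lam i))) lerXn2r // ?nnegrE.
  by rewrite exprMn ler_wpM2r // sqr_ge0.
rewrite -(sq_orth z hQ) -hw.
by rewrite -[X in _ <= X]mulr1 -[X in _ <= _ * X]sv ler_wpM2l // sqr_ge0.
Qed.

Lemma lower (P : 'M_(k.+1, n)) : is_MP_inverse X P ->
  (exists i, (1 < alg_mult A (lam i))%N) ->
  exists v, norm2 v = 1 /\ L = norm2 ((A - Ymat A x0 k *m P) *m v).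
Proof.
move=> [h1 h2 h3 h4] hex.
have [i0 hi0 hL] := bigmax_attained (P := fun i => (1 < alg_mult A (lam i))%N) (F := fun i => `|lam i|) hex (fun i => normr_ge0 (lam i)).
have [j [hj hlj]] := (mult_gt1 i0).1 hi0.
set zf := fun l : 'I_n => if l == i0 then c j else if l == j then - c i0 else 0.
have zf0 : forall l, l != i0 -> l != j -> zf l = 0.
  by move=> l /negbTE h1l /negbTE h2l; rewrite /zf h1l h2l.
have zfi0 : zf i0 = c j by rewrite /zf eqxx.
have zfj : zf j = - c i0 by rewrite /zf (negbTE hj) eqxx.
set z := \col_l zf l.
have sz : sq z = c j ^+ 2 + c i0 ^+ 2.
  rewrite /sq (two_sum hj); last by move=> l h1' h2'; rewrite mxE zf0 // expr0n.
  by rewrite !mxE zfi0 zfj sqrrN addrC.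
have sz0 : 0 < sq z.
  have cj2 : 0 < c j ^+ 2 by rewrite lt_def sqr_ge0 andbT sqrf_eq0 hc.
  by rewrite sz; apply: (lt_le_trans cj2); rewrite lerDl sqr_ge0.
set s := Num.sqrt (sq z).
have s0 : 0 < s by rewrite sqrtr_gt0.
set v := s^-1 *: (Q *m z).
have hv : norm2 v = 1.
  rewrite norm2Z norm2E sq_orth // -/s ger0_norm ?invr_ge0 ?ltW //.
  by rewrite mulVf // gt_eqF.
have hXz : X^T *m (Q *m z) = 0.
  apply/colP => t; rewrite XQz mxE (two_sum hj); last first.
    by move=> l h1' h2'; rewrite mxE zf0 // mulr0.
  rewrite !mxE zfi0 zfj hlj; ring.
have hXv : X^T *m v = 0 by rewrite /v -scalemxAr hXz scaler0.
have hPv : X *m P *m v = 0.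
  by rewrite -h3 trmx_mul -mulmxA hXv mulmx0.
have hDz : diag_mx (\row_i lam i) *m z = lam i0 *: z.
  apply/colP => l; rewrite mul_diag_mx !mxE.
  have [->|hl] := eqVneq l i0; first by [].
  have [->|hl'] := eqVneq l j; first by rewrite hlj.
  by rewrite zf0 // !mulr0.
exists v; split => //.
rewrite YAX mulmxBl -!mulmxA (mulmxA X P v) hPv mulmx0 subr0.
rewrite /v -scalemxAr mulmxA AQ -mulmxA hDz -scalemxAr scalerA mulrC -scalerA.
by rewrite -/v norm2Z hv mulr1 /L hL.
Qed.


End Spec.

Unset Implicit Arguments.

Theorem theorem4 (R : realType) (n : nat) (A : 'M[R]_n) (Q : 'M[R]_n)
  (lam : 'I_n -> R) (x0 : 'cV[R]_n) (k : nat) :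
  A^T = A ->
  Q^T *m Q = 1%:M ->
  (forall i : 'I_n, A *m col i Q = lam i *: col i Q) ->
  (forall i : 'I_n, ((col i Q)^T *m x0) 0 0 != 0) ->
  (exists i : 'I_n, (1 < alg_mult A (lam i))%N) ->
  (size (undup [seq lam i | i <- enum 'I_n]) <= k)%N ->
  spec_norm (A - Ymat A x0 k *m pinvMP (Xmat A x0 k))
  = \big[Num.max/0]_(i : 'I_n | (1 < alg_mult A (lam i))%N) `|lam i|.
Proof.
move=> hA hQ hE hc hex hk.
have hMP := pinvMP_spec (Xmat A x0 k).
set M := A - _.
set L := \big[Num.max/0]_(i : 'I_n | _) _.
rewrite /spec_norm; set S := (X in sup X).
have ub : forall r, S r -> r <= L.
  move=> r [v [hv ->]]; exact: (upper hA hQ hE hc hk hMP hv).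
have [v [hv hL]] := lower hA hQ hE hc hMP hex.
have SL : S L by exists v.
apply/le_anti/andP; split.
  by apply: ge_sup; [exists L | exact: ub].
apply: sup_upper_bound => //; split; first by exists L.
by exists L.
Qed.
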